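(* Let $T$ be a finite tree and let $M$ be a minimal dominating set of $T$ with $|M|=\Gamma(T)$. Then (i) $|a_1(M)|=|N_1(M)|$; (ii) for every $X\subseteq N_2(M)$, $|X|\le |N(X)\cap a_2(M)|$.
   Context: A dominating set of a graph $G=(V,E)$ is a set $S\subseteq V$ such that every vertex is in $S$ or adjacent to a vertex of $S$; it is minimal if no proper subset is dominating. $\Gamma(T)$ is the maximum size of a minimal dominating set of $T$. $N[u]=N(u)\cup\{u\}$; $N(X)=\bigcup_{x\in X}N(x)$. For a dominating set $S$: $a(S)=\{u\in S: S\setminus\{u\}\text{ is not dominating}\}$; $N_1(S)=\{u\in V\setminus S: |N[u]\cap S|=1\}$; $N_2(S)=\{u\in V\setminus S: |N[u]\cap S|\ge 2\}$; $a_1(S)=\{u\in a(S): N[u]\cap N_1(S)\ne\emptyset\}$; $a_2(S)=\{u\in a(S): N[u]\cap N_1(S)=\emptyset\}$. *)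

(* Defs.v *)
From mathcomp Require Import all_boot.
Set Implicit Arguments. Unset Strict Implicit. Unset Printing Implicit Defensive.

Section Graph.
Variables (T : finType) (e : rel T).

Definition simple_graph : Prop := symmetric e /\ irreflexive e.

Definition connected_graph : Prop := forall x y : T, connect e x y.

Definition acyclic_graph : Prop :=
  forall c : seq T, uniq c -> 3 <= size c -> ~~ cycle e c.

Definition is_tree : Prop :=
  [/\ simple_graph, connected_graph & acyclic_graph].

Definition opnbhd (u : T) : {set T} := [set v | e u v].
Definition clnbhd (u : T) : {set T} := [set v | (v == u) || e u v].
Definition opnbhdS (X : {set T}) : {set T} := \bigcup_(x in X) opnbhd x.

Definition dominating (S : {set T}) : bool :=
  [forall v, [exists u in S, v \in clnbhd u]].

Definition minimal_dominating (S : {set T}) : bool :=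
  dominating S && [forall S' : {set T}, (S' \proper S) ==> ~~ dominating S'].

Definition Gamma : nat := \max_(S : {set T} | minimal_dominating S) #|S|.

Definition aS (S : {set T}) : {set T} := [set u in S | ~~ dominating (S :\ u)].
Definition N1 (S : {set T}) : {set T} :=
  [set u in ~: S | #|clnbhd u :&: S| == 1].
Definition N2 (S : {set T}) : {set T} :=
  [set u in ~: S | 2 <= #|clnbhd u :&: S|].
Definition a1 (S : {set T}) : {set T} :=
  [set u in aS S | clnbhd u :&: N1 S != set0].
Definition a2 (S : {set T}) : {set T} :=
  [set u in aS S | clnbhd u :&: N1 S == set0].

End Graph.

(* Main.v *)
Require Import Defs.
From mathcomp Require Import all_boot zify.
Set Implicit Arguments. Unset Strict Implicit. Unset Printing Implicit Defensive.

Lemma nonuniq_split (T : eqType) (s : seq T) : ~~ uniq s ->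
  exists p1 x p2 p3, s = p1 ++ x :: p2 ++ x :: p3.
Proof.
elim: s => //= y t IH /nandP [/negbNE yt | /IH [p1 [x [p2 [p3 ->]]]]].
  case/splitPr: yt => p2 p3. by exists [::], y, p2, p3.
by exists (y :: p1), x, p2, p3.
Qed.

Section Col.
Variables (T : finType) (e : rel T).
Hypothesis irr : irreflexive e.
Hypothesis sym : symmetric e.

Lemma odd_cycle n (c : seq T) : size c <= n -> cycle e c -> odd (size c) ->
  exists c', [/\ uniq c', 3 <= size c' & cycle e c'].
Proof.
elim: n c => [|n IH] c; first by case: c.
move=> hs hc ho.
case hu: (uniq c).
  exists c; split => //.
  case: c hs hc ho hu => [|x [|y [|z t]]] //= _.
  by rewrite irr.
move/negbT: hu => /nonuniq_split [p1 [x [p2 [p3 E]]]].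
have hc' : cycle e (x :: p2 ++ x :: p3 ++ p1).
  by move: hc; rewrite -(rot_cycle (size p1)) E rot_size_cat /= -catA.
move: hc'; rewrite /= rcons_path cat_path /= => /andP [/andP [pa /andP [ea pb]] eb].
have c1 : cycle e (x :: p2) by rewrite /= rcons_path pa ea.
have c2 : cycle e (x :: p3 ++ p1).
  by rewrite /= rcons_path pb; rewrite last_cat /= in eb *.
have hsz : size c = (size (x :: p2) + size (x :: p3 ++ p1))%N.
  rewrite E /= !size_cat /= !size_cat /=; lia.
move: ho; rewrite hsz oddD; case o1: (odd (size (x :: p2))) => /= o2.
  apply: (IH (x :: p2)) => //. rewrite hsz in hs. simpl in *. lia.
apply: (IH (x :: p3 ++ p1)) => //. rewrite hsz in hs. simpl in *. lia.
Qed.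

Lemma tree_coloring : is_tree e -> exists c : T -> bool, forall x y, e x y -> c x != c y.
Proof.
rewrite /is_tree => -[_ conn acyc].
case: (pickP (fun _ : T => true)) => [r _|none]; last by exists (fun _ => true) => x; have := none x.
have ex : forall x, exists p, path e r p && (last r p == x).
  by move=> x; case/connectP: (conn r x) => p hp ->; exists p; rewrite hp eqxx.
exists (fun x => odd (size (xchoose (ex x)))) => x y exy.
move: (xchooseP (ex x)) (xchooseP (ex y)).
set px := xchoose (ex x); set py := xchoose (ex y).
move=> /andP [hpx /eqP lx] /andP [hpy /eqP ly].
apply/negP => /eqP hodd.
have hc : cycle e (r :: px ++ rev py).
  rewrite /= -cats1 -catA cats1 -rev_cons lastI rev_rcons cat_path hpx /= lx ly exy /=.
  rewrite -{1}ly rev_path.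
  by rewrite (@eq_path _ _ e) // => a b; rewrite sym.
have ho : odd (size (r :: px ++ rev py)).
  by rewrite /= size_cat size_rev oddD hodd addbb.
have [c' [u3 s3 cc]] := odd_cycle (leqnn _) hc ho.
by move: (acyc c' u3 s3); rewrite cc.
Qed.
End Col.
Section Main.
Variables (T : finType) (e : rel T).
Hypothesis irr : irreflexive e.
Hypothesis sym : symmetric e.

Lemma cardsU_disj (A B : {set T}) : (forall x, x \in A -> x \notin B) ->
  #|A :|: B| = #|A| + #|B|.
Proof.
move=> h; rewrite -cardsUI.
suff -> : A :&: B = set0 by rewrite cards0 addn0.
apply/setP => x; rewrite !inE; apply/negbTE/negP => /andP [xa xb].
by move: (h x xa); rewrite xb.
Qed.

Lemma indep_le_Gamma (I : {set T}) :
  (forall x y, x \in I -> y \in I -> ~~ e x y) -> #|I| <= Gamma e.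
Proof.
move=> hI.
pose P := fun S : {set T} => [forall x in S, forall y in S, ~~ e x y].
have PI : P I by apply/forall_inP => x xI; apply/forall_inP => y yI; exact: hI.
case: (maxset_exists PI) => A /maxsetP [PA maxA] sIA.
have indA : forall x y, x \in A -> y \in A -> ~~ e x y.
  by move=> x y xA yA; move/forall_inP: PA => /(_ x xA) /forall_inP /(_ y yA).
have mdA : minimal_dominating e A.
  apply/andP; split.
    apply/forallP => v.
    case vA: (v \in A).
      by apply/existsP; exists v; rewrite vA /clnbhd inE eqxx.
    have : ~~ P (v |: A).
      apply/negP => Pv.
      have := maxA _ Pv (subsetUr _ _) => /setP /(_ v).
      by rewrite !inE eqxx vA.
    rewrite negb_forall_in => /existsP [x /andP [xvA]].
    rewrite negb_forall_in => /existsP [y /andP [yvA /negbNE exy]].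
    move: xvA yvA; rewrite !inE => /orP [/eqP xv|xA] /orP [/eqP yv|yA].
    - by move: exy; rewrite xv yv irr.
    - apply/existsP; exists y; rewrite yA /clnbhd inE.
      by rewrite -xv sym exy orbT.
    - apply/existsP; exists x; rewrite xA /clnbhd inE.
      by rewrite -yv exy orbT.
    - by move: (indA x y xA yA); rewrite exy.
  apply/forallP => S'; apply/implyP => hS'.
  have [a aA aS'] : exists2 a, a \in A & a \notin S'.
    by case/properP: hS' => _ [a aA aS']; exists a.
  apply/negP => /forallP /(_ a) /existsP [u /andP [uS']].
  rewrite /clnbhd inE => /orP [/eqP au|eua].
    by move: aS'; rewrite au uS'.
  have uA : u \in A by case/properP: hS' => /subsetP /(_ u uS').
  by move: (indA u a uA aA); rewrite eua.
apply: (leq_trans (subset_leq_card sIA)).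
rewrite /Gamma; exact: (@leq_bigmax_cond _ (fun S => minimal_dominating e S) (fun S => #|S|) A mdA).
Qed.

Variable c : T -> bool.
Hypothesis hc : forall x y, e x y -> c x != c y.

Variable M : {set T}.
Hypothesis hmin : minimal_dominating e M.
Hypothesis hG : #|M| = Gamma e.

Lemma clE u v : (v \in clnbhd e u) = (v == u) || e u v.
Proof. by rewrite /clnbhd inE. Qed.

Lemma private u : u \in M -> exists w, w \in clnbhd e u /\
  forall u', u' \in M -> u' != u -> w \notin clnbhd e u'.
Proof.
move=> uM; case/andP: hmin => hdom /forallP /(_ (M :\ u)).
rewrite properD1 //= => /negP hnd.
have : ~~ dominating e (M :\ u) by apply/negP.
rewrite /dominating negb_forall => /existsP [w hw].
move/forallP: hdom => /(_ w) /existsP [u0 /andP [u0M wu0]].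
case: (eqVneq u0 u) => [eu|neu].
  exists w; split; first by rewrite -eu.
  move=> u' u'M nu'; apply/negP => wu'.
  by move/existsPn: hw => /(_ u'); rewrite in_setD1 nu' u'M wu'.
by move/existsPn: hw => /(_ u0); rewrite in_setD1 neu u0M wu0.
Qed.

Lemma aSM : aS e M = M.
Proof.
apply/setP => u; rewrite /aS inE; case uM: (u \in M) => //=.
case/andP: hmin => _ /forallP /(_ (M :\ u)); by rewrite properD1.
Qed.

Lemma a2_prop y z : y \in a2 e M -> (z \in M) || (z \in N1 e M) -> ~~ e y z.
Proof.
rewrite /a2 inE aSM => /andP [yM /eqP h0] hz.
have nN1 : forall v, v \in clnbhd e y -> v \notin N1 e M.
  move=> v vy; apply/negP => vN.
  by move: h0 => /setP /(_ v); rewrite in_setI vy vN in_set0.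
have [w [wy wp]] := private yM.
have wey : w = y.
  case: (eqVneq w y) => // nwy; exfalso.
  have ewy : e y w by move: wy; rewrite clE (negbTE nwy).
  have wM : w \notin M.
    apply/negP => wM; have := wp w wM nwy; by rewrite clE eqxx.
  have : w \in N1 e M.
    rewrite /N1 inE inE wM /=.
    apply/cards1P; exists y; apply/setP => v; rewrite !inE.
    case: (eqVneq v y) => [->|nvy]; first by rewrite yM sym ewy orbT.
    apply/negbTE/negP => /andP [wv vM].
    move: (wp v vM nvy); rewrite clE.
    move: wv => /orP [/eqP ->|evw]; first by rewrite eqxx.
    by rewrite sym evw orbT.
  by rewrite (negbTE (nN1 w wy)).
move: wp; rewrite wey => wp.
case/orP: hz => [zM|zN].
  apply/negP => eyz; case: (eqVneq z y) => [zy|nzy].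
    by move: eyz; rewrite zy irr.
  by move: (wp z zM nzy); rewrite clE sym eyz orbT.
apply/negP => eyz; move: (nN1 z); rewrite clE eyz orbT => /(_ isT).
by rewrite zN.
Qed.

Definition g (v : T) : T := odflt v [pick u in clnbhd e v :&: M].

Lemma gP v : v \in N1 e M ->
  [/\ g v \in M, e v (g v) & forall u, u \in M -> u \in clnbhd e v -> u = g v].
Proof.
rewrite /N1 !inE => /andP [vM /cards1P [u hu]].
have hpick : [pick u in clnbhd e v :&: M] = Some u.
  case: pickP => [u' |]; first by rewrite hu inE => /eqP ->.
  by move=> /(_ u); rewrite hu inE eqxx.
rewrite /g hpick /=.
have : u \in clnbhd e v :&: M by rewrite hu inE.
rewrite inE clE => /andP [/orP [/eqP uv|evu] uM].
  by move: vM; rewrite -uv uM.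
split => // u' u'M u'v; have : u' \in clnbhd e v :&: M by rewrite inE u'v u'M.
by rewrite hu inE => /eqP.
Qed.

Definition Cb (b : bool) : {set T} := [set x | c x == b].

Lemma in_a1 u : (u \in a1 e M) = (u \in M) && (clnbhd e u :&: N1 e M != set0).
Proof. by rewrite /a1 in_set aSM. Qed.
Lemma in_a2 u : (u \in a2 e M) = (u \in M) && (clnbhd e u :&: N1 e M == set0).
Proof. by rewrite /a2 in_set aSM. Qed.

Lemma N1_notM v : v \in N1 e M -> v \notin M.
Proof. by rewrite /N1 !inE => /andP []. Qed.

Lemma a1_sub b : a1 e M :\: Cb b \subset g @: (N1 e M :&: Cb b).
Proof.
apply/subsetP => u; rewrite in_setD /Cb inE => /andP [ncb].
rewrite in_a1 => /andP [uM /set0Pn [v]]; rewrite in_setI => /andP [vu vN].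
have [gM evg gu] := gP vN.
have vneu : v != u by apply/negP => /eqP vu'; move: (N1_notM vN); rewrite vu' uM.
have euv : e u v by move: vu; rewrite clE (negbTE vneu).
have -> : u = g v by apply: gu => //; rewrite clE sym euv orbT.
apply/imsetP; exists v => //.
rewrite in_setI vN inE /=.
move: (hc euv) ncb; by case: (c u); case: (c v); case: b.
Qed.

Lemma M_sub b : M :\: Cb b \subset (a1 e M :\: Cb b) :|: (a2 e M :\: Cb b).
Proof.
apply/subsetP => u; rewrite !in_setD in_setU !in_setD => /andP [ncb uM].
by rewrite ncb in_a1 in_a2 uM; case: (_ == set0).
Qed.

Lemma in_opnbhdS (Y : {set T}) v : (v \in opnbhdS e Y) = [exists y in Y, e y v].
Proof.
apply/bigcupP/existsP => [[y yY]|[y /andP [yY eyv]]].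
  by rewrite /opnbhd inE => eyv; exists y; rewrite yY.
by exists y => //; rewrite /opnbhd inE.
Qed.

Lemma key b (Y : {set T}) : (forall y, y \in Y -> c y = b) ->
  (forall y, y \in Y -> (y \notin M) && (y \notin N1 e M)) ->
  #|M :&: Cb b| + #|N1 e M :&: Cb b| + #|(a2 e M :\: Cb b) :\: opnbhdS e Y| + #|Y|
   <= Gamma e.
Proof.
move=> hY hY2.
set I := ((M :&: Cb b) :|: (N1 e M :&: Cb b)) :|: ((a2 e M :\: Cb b) :\: opnbhdS e Y) :|: Y.
have colb : forall x, x \in (M :&: Cb b) :|: (N1 e M :&: Cb b) -> c x = b.
  by move=> x; rewrite !inE => /orP [] /andP [_ /eqP].
have hI : #|I| = #|M :&: Cb b| + #|N1 e M :&: Cb b| +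
    #|(a2 e M :\: Cb b) :\: opnbhdS e Y| + #|Y|.
  rewrite /I cardsU_disj; last first.
    move=> x hx; apply/negP => /hY2 /andP [xM xN].
    have : (x \in M) || (x \in N1 e M).
      case/setUP: hx => [/setUP [] /setIP [] -> //|]; first by rewrite orbT.
      by case/setDP => /setDP []; rewrite in_a2 => /andP [-> _].
    by rewrite (negbTE xM) (negbTE xN).
  rewrite cardsU_disj; last first.
    move=> x /colb cx; apply/negP => /setDP [/setDP [_]].
    by rewrite /Cb inE cx eqxx.
  rewrite cardsU_disj //.
  by move=> x /setIP [xM _]; apply/negP => /setIP [/N1_notM]; rewrite xM.
have cls : forall y, y \in I ->
   ([|| y \in M, y \in N1 e M | y \in Y]) /\
       ((c y == b) || (y \in a2 e M) && (y \notin opnbhdS e Y)).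
  move=> y; case/setUP => [/setUP [yAB|]|yY].
  - rewrite (colb y yAB) eqxx; split => //.
    by case/setUP: yAB => /setIP [-> _]; rewrite ?orbT.
  - case/setDP => /setDP [ya2 _] ->; rewrite ya2 orbT; split => //.
    by move: ya2; rewrite in_a2 => /andP [->].
  - by rewrite yY (hY y yY) eqxx !orbT.
have side2 : forall x y, x \in a2 e M -> x \notin opnbhdS e Y -> y \in I -> ~~ e x y.
  move=> x y xa2 xNY /cls [hy _].
  case/or3P: hy => [yM|yN|yY].
  - by apply: a2_prop => //; rewrite yM.
  - by apply: a2_prop => //; rewrite yN orbT.
  apply/negP => exy; move: xNY; rewrite in_opnbhdS => /existsP; apply.
  by exists y; rewrite yY sym exy.
rewrite -hI; apply: indep_le_Gamma => x y xI yI.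
have [_ hx] := cls x xI; have [_ hy] := cls y yI.
case/orP: hx => [/eqP cxb | /andP [xa2 xNY]]; last exact: side2 xa2 xNY yI.
case/orP: hy => [/eqP cyb | /andP [ya2 yNY]]; last by rewrite sym; exact: side2 ya2 yNY xI.
by apply/negP => /hc; rewrite cxb cyb eqxx.
Qed.
Lemma main_ineq b (Y : {set T}) : (forall y, y \in Y -> c y = b) ->
  (forall y, y \in Y -> (y \notin M) && (y \notin N1 e M)) ->
  #|Y| + #|N1 e M :&: Cb b| <=
  #|g @: (N1 e M :&: Cb b)| + #|(a2 e M :\: Cb b) :&: opnbhdS e Y|.
Proof.
move=> hY hY2; have hk := key hY hY2.
have h1 := cardsID (Cb b) M.
have h2 : #|M :\: Cb b| <= #|a1 e M :\: Cb b| + #|a2 e M :\: Cb b|.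
  apply: (leq_trans (subset_leq_card (M_sub b))).
  by rewrite -cardsUI leq_addr.
have h3 := subset_leq_card (a1_sub b).
have h4 := cardsID (opnbhdS e Y) (a2 e M :\: Cb b).
rewrite -hG in hk; lia.
Qed.

Lemma part1 : #|a1 e M| = #|N1 e M|.
Proof.
have -> : a1 e M = g @: N1 e M.
  apply/setP => u; apply/idP/idP.
    rewrite in_a1 => /andP [uM /set0Pn [v]]; rewrite in_setI => /andP [vu vN].
    have [gM evg gu] := gP vN.
    have vneu : v != u by apply/negP => /eqP vu'; move: (N1_notM vN); rewrite vu' uM.
    have euv : e u v by move: vu; rewrite clE (negbTE vneu).
    have -> : u = g v by apply: gu => //; rewrite clE sym euv orbT.
    by apply/imsetP; exists v.
  case/imsetP => v vN ->; have [gM evg gu] := gP vN.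
  rewrite in_a1 gM /=; apply/set0Pn; exists v.
  by rewrite in_setI vN clE sym evg orbT.
apply/eqP/imset_injP => p q pN qN gpq.
case: (eqVneq p q) => // npq; exfalso.
have [gpM epg _] := gP pN; have [gqM eqg _] := gP qN.
pose b := ~~ c (g p).
have pC : p \in N1 e M :&: Cb b.
  by rewrite in_setI pN /Cb inE /b; move: (hc epg); case: (c p); case: (c (g p)).
have qC : q \in N1 e M :&: Cb b.
  by rewrite in_setI qN /Cb inE /b gpq; move: (hc eqg); case: (c q); case: (c (g q)).
have h0a : forall y : T, y \in (set0 : {set T}) -> c y = b by move=> y; rewrite inE.
have h0b : forall y : T, y \in (set0 : {set T}) -> (y \notin M) && (y \notin N1 e M).
  by move=> y; rewrite inE.
have := main_ineq h0a h0b.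
rewrite cards0 add0n.
have -> : opnbhdS e set0 = set0 by rewrite /opnbhdS big_set0.
rewrite setI0 cards0 addn0 => hle.
have hne : #|g @: (N1 e M :&: Cb b)| != #|N1 e M :&: Cb b|.
  by apply/negP => /imset_injP /(_ p q pC qC gpq) /eqP; rewrite (negbTE npq).
have := leq_imset_card g (N1 e M :&: Cb b); lia.
Qed.

Lemma nbhd_col b (Y : {set T}) v : Y \subset Cb b -> v \in opnbhdS e Y -> c v = ~~ b.
Proof.
move=> /subsetP sY; rewrite in_opnbhdS => /existsP [y /andP [yY eyv]].
move: (hc eyv) (sY y yY); rewrite /Cb inE => h /eqP <-.
by move: h; case: (c v); case: (c y).
Qed.

Lemma part2 (X : {set T}) : X \subset N2 e M ->
  #|X| <= #|opnbhdS e X :&: a2 e M|.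
Proof.
move=> /subsetP sX; rewrite leqNgt; apply/negP => hlt.
have hXb : forall b, (forall y, y \in X :&: Cb b -> c y = b) /\
  (forall y, y \in X :&: Cb b -> (y \notin M) && (y \notin N1 e M)).
  move=> b; split => y /setIP [yX yC]; first by move: yC; rewrite /Cb inE => /eqP.
  move: (sX y yX); rewrite /N2 /N1 !in_set => /andP [ny h2]; rewrite ny /=.
  by apply/eqP => h1; rewrite h1 in h2.
have hb : forall b, #|X :&: Cb b| <= #|opnbhdS e (X :&: Cb b) :&: a2 e M|.
  move=> b; case: (hXb b) => h1 h2.
  have := main_ineq h1 h2.
  have := leq_imset_card g (N1 e M :&: Cb b).
  have : #|(a2 e M :\: Cb b) :&: opnbhdS e (X :&: Cb b)| <=
         #|opnbhdS e (X :&: Cb b) :&: a2 e M|.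
    apply: subset_leq_card; apply/subsetP => v; rewrite !in_setI in_setD.
    by case/andP => /andP [_ ->] ->.
  lia.
have hsplit : #|X| = #|X :&: Cb true| + #|X :&: Cb false|.
  have -> : X :&: Cb false = X :\: Cb true.
    by apply/setP => v; rewrite !inE; case: (c v); rewrite ?andbT ?andbF.
  by rewrite cardsID.
have hN : #|opnbhdS e (X :&: Cb true) :&: a2 e M| +
          #|opnbhdS e (X :&: Cb false) :&: a2 e M| <= #|opnbhdS e X :&: a2 e M|.
  rewrite -cardsU_disj.
    apply: subset_leq_card; apply/subsetP => v.
    have sub : forall b, opnbhdS e (X :&: Cb b) \subset opnbhdS e X.
      move=> b; apply/subsetP => w; rewrite !in_opnbhdS => /existsP [y /andP [/setIP [yX _] eyw]].
      by apply/existsP; exists y; rewrite yX.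
    case/setUP => /setIP [vN va]; rewrite in_setI va andbT.
      exact: (subsetP (sub true)).
    exact: (subsetP (sub false)).
  move=> v /setIP [vN _]; apply/negP => /setIP [vN' _].
  have := nbhd_col (subsetIr _ _) vN; have := nbhd_col (subsetIr _ _) vN'.
  by move=> ->.
have := hb true; have := hb false; lia.
Qed.

End Main.

Theorem theorem4p7 (T : finType) (e : rel T) (M : {set T}) :
  is_tree e ->
  minimal_dominating e M ->
  #|M| = Gamma e ->
  #|a1 e M| = #|N1 e M| /\
  (forall X : {set T}, X \subset N2 e M ->
     #|X| <= #|opnbhdS e X :&: a2 e M|).
Proof.
move=> ht hmin hG.
have [[sym irr] _ _] := ht.
have [c hc] := tree_coloring irr sym ht.
split; first exact: (part1 irr sym hc hmin hG).
exact: (part2 irr sym hc hmin hG).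
Qed.
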